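(* Let $(\mathfrak{A},\mathfrak{A}_0)$ be a CQ*-algebra as in the context, let $H=H^*\in\mathfrak{A}_0$, $\omega\in E(\mathfrak{A}_0)$ and $\alpha\in\mathbb{C}$. Consider the statements: (i) $\overline{\omega}$ is an eigenstate of $H$ with eigenvalue $\alpha$; (ii) $\omega$ is an eigenstate of $H$ with eigenvalue $\alpha$; (iii) for every $t\in\mathbb{R}$, $\overline{\omega}$ is an eigenstate of $e^{itH}$ with eigenvalue $e^{it\alpha}$; (iv) for every $t\in\mathbb{R}$, $\omega$ is an eigenstate of $e^{itH}$ with eigenvalue $e^{it\alpha}$. Then (i)$\Leftrightarrow$(ii), (iii)$\Leftrightarrow$(iv), and (ii)$\Rightarrow$(iv).
   Context: Let $\mathfrak{A}_0$ be a unital C*-algebra with C*-norm $\|\cdot\|_0$ and unit $I$, and $\|\cdot\|$ another norm on $\mathfrak{A}_0$ with $\|A\|\le\|A\|_0$, $\|AB\|\le\|A\|\,\|B\|_0$, $\|A^*\|=\|A\|$. $\mathfrak{A}$ is the $\|\cdot\|$-completion of $\mathfrak{A}_0$, with $XA:=\lim A_nA$, $AX:=\lim AA_n$ for $X\in\mathfrak{A}$, $A\in\mathfrak{A}_0$, $A_n\in\mathfrak{A}_0$, $\|A_n-X\|\to0$. $E(\mathfrak{A}_0)$ is the set of positive linear functionals $\omega$ on $\mathfrak{A}_0$ with $\omega(I)=1$ and $|\omega(A)|\le\gamma\|A\|$ for some $\gamma>0$; $\overline{\omega}$ is its $\|\cdot\|$-continuous extension to $\mathfrak{A}$. For $Y\in\mathfrak{A}$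 and $\beta\in\mathbb{C}$, $\overline{\omega}$ is an eigenstate of $Y$ with eigenvalue $\beta$ if $\overline{\omega}(AY)=\beta\,\overline{\omega}(A)$ for all $A\in\mathfrak{A}_0$; for $Y\in\mathfrak{A}_0$, $\omega$ is an eigenstate of $Y$ with eigenvalue $\beta$ if $\omega(AY)=\beta\,\omega(A)$ for all $A\in\mathfrak{A}_0$. $e^{itH}\in\mathfrak{A}_0$ is defined by functional calculus. *)

(* Defs.v *)
From HB Require Import structures.
From mathcomp Require Import all_boot all_algebra.
From mathcomp Require Import complex.
From mathcomp Require Import reals.
From mathcomp.analysis Require Import sequences exp trigo.
From Stdlib Require Import ClassicalEpsilon.
Import GRing.Theory Num.Theory.

Set Implicit Arguments.
Unset Strict Implicit.
Unset Printing Implicit Defensive.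

Local Open Scope ring_scope.
Local Open Scope complex_scope.

Section Defs.
Variable R : realType.
Local Notation C := R[i].

Definition cabs (c : C) : R := ComplexField.Normc.normc c.

Section Norms.
Variable V : lmodType C.

Definition is_norm (N : V -> R) : Prop :=
  [/\ forall x, 0 <= N x,
      forall x, N x = 0 -> x = 0,
      forall (c : C) x, N (c *: x) = cabs c * N x &
      forall x y, N (x + y) <= N x + N y].

Definition cvg_in (N : V -> R) (u : nat -> V) (l : V) : Prop :=
  forall e : R, 0 < e -> exists K : nat, forall k, (K <= k)%N -> N (u k - l) < e.

Definition cauchy_in (N : V -> R) (u : nat -> V) : Prop :=
  forall e : R, 0 < e -> exists K : nat,
    forall k m, (K <= k)%N -> (K <= m)%N -> N (u k - u m) < e.

Definition complete_in (N : V -> R) : Prop :=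
  forall u, cauchy_in N u -> exists l, cvg_in N u l.

Definition linear_fun (W : lmodType C) (f : V -> W) : Prop :=
  forall (c : C) x y, f (c *: x + y) = c *: f x + f y.
End Norms.

Definition is_Cstar_algebra (A0 : algType C) (star : A0 -> A0) (n0 : A0 -> R)
  : Prop :=
  [/\ forall a b, star (a + b) = star a + star b,
      forall (c : C) a, star (c *: a) = (c^*)%C *: star a,
      forall a b, star (a * b) = star b * star a &
      forall a, star (star a) = a] /\
  [/\ is_norm n0,
      forall a b, n0 (a * b) <= n0 a * n0 b,
      forall a, n0 (star a * a) = n0 a ^+ 2 &
      complete_in n0].

(* The CQ*-algebra (A, A0): a second norm n on A0 with the compatibility *)
(* conditions of the paper, and A = X the n-completion of A0, given by a *)
(* complete normed space X with an isometric linear map j : A0 -> X with *)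
(* dense range.                                                          *)
Definition is_CQstar_algebra (A0 : algType C) (star : A0 -> A0) (n0 n : A0 -> R)
  (X : lmodType C) (nX : X -> R) (j : A0 -> X) : Prop :=
  [/\ is_Cstar_algebra star n0,
      is_norm n,
      forall a, n a <= n0 a,
      forall a b, n (a * b) <= n a * n0 b &
      forall a, n (star a) = n a] /\
  [/\ is_norm nX, complete_in nX,
      linear_fun j, (forall a, nX (j a) = n a) &
      forall x : X, exists u : nat -> A0, cvg_in nX (j \o u) x].

(* AX := lim A A_n  (A in A0, X in the completion, j A_n -> X)          *)
Definition leftmul (A0 : algType C) (X : lmodType C) (nX : X -> R)
  (j : A0 -> X) (a : A0) (x : X) : X :=
  epsilon (inhabits 0) (fun z : X => exists u : nat -> A0,
     cvg_in nX (j \o u) x /\ cvg_in nX (fun k => j (a * u k)) z).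

Definition in_E (A0 : algType C) (star : A0 -> A0) (n : A0 -> R) (w : A0 -> C)
  : Prop :=
  [/\ linear_fun (w : A0 -> C^o),
      forall a, 0 <= w (star a * a),
      w 1 = 1 &
      exists gamma : R, 0 < gamma /\ forall a, cabs (w a) <= gamma * n a].

Definition omega_bar (A0 : algType C) (X : lmodType C) (nX : X -> R)
  (j : A0 -> X) (w : A0 -> C) : X -> C :=
  epsilon (inhabits (fun _ => 0)) (fun f : X -> C =>
     [/\ linear_fun (f : X -> C^o),
         (exists gamma : R, forall x, cabs (f x) <= gamma * nX x) &
         forall a, f (j a) = w a]).

Definition eigenstate_bar (A0 : algType C) (X : lmodType C) (nX : X -> R)
  (j : A0 -> X) (w : A0 -> C) (Y : X) (beta : C) : Prop :=
  forall a : A0, omega_bar nX j w (leftmul nX j a Y) = beta * omega_bar nX j w (j a).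

Definition eigenstate (A0 : algType C) (w : A0 -> C) (Y : A0) (beta : C) : Prop :=
  forall a : A0, w (a * Y) = beta * w a.

Definition expC (z : C) : C :=
  (expR (complex.Re z))%:C * ((cos (complex.Im z))%:C + 'i * (sin (complex.Im z))%:C).

(* e^{itH} in A0: for H = H^*, the continuous functional calculus of
   x |-> e^{itx} at H coincides with the n0-norm-convergent exponential
   series sum_m (it)^m/m! H^m; we define e^{itH} as the limit of it. *)
Definition expA (A0 : algType C) (n0 : A0 -> R) (H : A0) (t : R) : A0 :=
  epsilon (inhabits 0) (fun U : A0 =>
     cvg_in n0 (fun k => \sum_(m < k) (('i * t%:C) ^+ m / (m`!)%:R) *: H ^+ m) U).

End Defs.

(* Main.v *)
Require Import Defs.
From HB Require Import structures.
From mathcomp Require Import all_boot all_algebra.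
From mathcomp Require Import complex.
From mathcomp Require Import reals.
From mathcomp.analysis Require Import sequences exp trigo.
From mathcomp Require Import boolp classical_sets topology normedtype.
From mathcomp Require Import ring lra.
From Stdlib Require Import ClassicalEpsilon.
Import order.Order.TTheory GRing.Theory Num.Theory numFieldNormedType.Exports.
Local Open Scope ring_scope.
Local Open Scope complex_scope.

Set Implicit Arguments.
Unset Strict Implicit.
Unset Printing Implicit Defensive.

Section Tool.
Variable R : realType.
Local Notation C := R[i].

Definition tends0 (r : nat -> R) :=
  forall e : R, 0 < e -> exists K : nat, forall k, (K <= k)%N -> r k < e.

Lemma tends0_le (r s : nat -> R) : (forall k, s k <= r k) -> tends0 r -> tends0 s.
Proof. move=> H h e e0; have [K HK] := h e e0; exists K => k Hk.
exact: le_lt_trans (H k) (HK k Hk). Qed.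

Lemma tends0_add (r s : nat -> R) : tends0 r -> tends0 s -> tends0 (fun k => r k + s k).
Proof.
move=> hr hs e e0.
have e2 : 0 < e / 2 by rewrite divr_gt0.
have [K1 H1] := hr _ e2; have [K2 H2] := hs _ e2.
exists (maxn K1 K2) => k Hk.
rewrite (splitr e); apply: ltrD.
  by apply: H1; apply: leq_trans Hk; rewrite leq_maxl.
by apply: H2; apply: leq_trans Hk; rewrite leq_maxr.
Qed.

Lemma tends0_scale (M : R) (r : nat -> R) : 0 <= M -> tends0 r -> tends0 (fun k => M * r k).
Proof.
move=> M0 hr e e0.
have e1 : 0 < e / (M + 1) by rewrite divr_gt0 // ltr_wpDl.
have [K HK] := hr _ e1; exists K => k Hk.
have := HK k Hk => h.
have M1 : 0 < M + 1 by rewrite ltr_wpDl.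
apply: (le_lt_trans (y := M * (e / (M+1)))).
  by apply: ler_wpM2l => //; apply: ltW.
rewrite mulrA ltr_pdivrMr // mulrDr mulr1.
by rewrite [M * e]mulrC ltrDl.
Qed.

Lemma tends0_const0 : tends0 (fun _ => 0).
Proof. by move=> e e0; exists 0%N. Qed.

Lemma cabs_ge0 (c : C) : 0 <= cabs c.
Proof. by case: c => a b; rewrite /cabs /= sqrtr_ge0. Qed.

Lemma cabs_real (x : R) : cabs x%:C = `|x|.
Proof. by rewrite /cabs /= expr0n /= addr0 sqrtr_sqr. Qed.

Lemma cabsM (x y : C) : cabs (x * y) = cabs x * cabs y.
Proof. exact: ComplexField.Normc.normcM. Qed.

Lemma cabsD (x y : C) : cabs (x + y) <= cabs x + cabs y.
Proof. exact: le_normcD. Qed.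

Lemma cabs_eq0 (x : C) : cabs x = 0 -> x = 0.
Proof. exact: ComplexField.Normc.eq0_normc. Qed.

Lemma cabs_norm : is_norm (V := C^o) (@cabs R).
Proof. split; [exact: cabs_ge0 | exact: cabs_eq0 | | exact: cabsD].
by move=> c x; apply: cabsM. Qed.

Section Gen.
Variable V : lmodType C.
Variable N : V -> R.
Hypothesis hN : is_norm N.

Lemma N_ge0 x : 0 <= N x. Proof. by case: hN. Qed.
Lemma N_eq0 x : N x = 0 -> x = 0. Proof. by case: hN => _ h _ _; apply: h. Qed.
Lemma NZ c x : N (c *: x) = cabs c * N x. Proof. by case: hN. Qed.
Lemma ND x y : N (x + y) <= N x + N y. Proof. by case: hN. Qed.
Lemma N0 : N 0 = 0.
Proof. by rewrite -(scale0r (0:V)) NZ /cabs /= expr0n /= addr0 sqrtr0 mul0r. Qed.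
Lemma NN x : N (- x) = N x.
Proof.
rewrite -scaleN1r NZ.
have -> : cabs (-1 : C) = 1 by rewrite /cabs /= oppr0 expr0n /= addr0 sqrtr_sqr normrN normr1.
by rewrite mul1r.
Qed.
Lemma NBC x y : N (x - y) = N (y - x).
Proof. by rewrite -NN opprB. Qed.
Lemma NB3 x y z : N (x - z) <= N (x - y) + N (y - z).
Proof. by have := ND (x - y) (y - z); rewrite addrA subrK. Qed.

Lemma cvg_tends0 u l : cvg_in N u l <-> tends0 (fun k => N (u k - l)).
Proof. by []. Qed.

Lemma cvg_unique u l1 l2 : cvg_in N u l1 -> cvg_in N u l2 -> l1 = l2.
Proof.
move=> h1 h2.
have : tends0 (fun k => N (u k - l1) + N (u k - l2)) by apply: tends0_add.
move=> h.
have : N (l1 - l2) <= 0.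
  apply/ler_addgt0Pr => e e0; rewrite add0r.
  have [K HK] := h e e0.
  apply: ltW; apply: le_lt_trans (HK K (leqnn K)).
  by apply: le_trans (NB3 l1 (u K) l2) _; rewrite [N (l1 - _)]NBC.
move=> hle; apply/eqP; rewrite -subr_eq0; apply/eqP/N_eq0.
by apply/eqP; rewrite eq_le hle N_ge0.
Qed.

Lemma cvg_const x : cvg_in N (fun _ => x) x.
Proof. by move=> e e0; exists 0%N => k _; rewrite subrr N0. Qed.

Lemma cvg_lin (c : C) u v x y : cvg_in N u x -> cvg_in N v y ->
  cvg_in N (fun k => c *: u k + v k) (c *: x + y).
Proof.
move=> hu hv.
apply: (tends0_le (r := fun k => cabs c * N (u k - x) + N (v k - y))).
  move=> k; rewrite opprD addrACA -scalerBr.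
  by apply: le_trans (ND _ _) _; rewrite NZ.
by apply: tends0_add => //; apply: tends0_scale => //; apply: cabs_ge0.
Qed.

Lemma cvg_cauchy_in u l : cvg_in N u l -> cauchy_in N u.
Proof.
move=> h e e0.
have e2 : 0 < e / 2 by rewrite divr_gt0.
have [K HK] := h _ e2.
exists K => k m Hk Hm.
apply: le_lt_trans (NB3 (u k) l (u m)) _.
by rewrite (splitr e) [N (l - _)]NBC; apply: ltrD; apply: HK.
Qed.

End Gen.
End Tool.

Section Compl.
Local Open Scope classical_set_scope.
Variable R : realType.
Local Notation C := R[i].

Lemma cvg_epsK (u : nat -> R) (l : R) :
  u @ \oo --> l -> forall e : R, 0 < e -> exists K : nat, forall k, (K <= k)%N -> `|u k - l| < e.
Proof.
move=> /cvgrPdistC_lt H e e0. have := H e e0.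
case=> N _ HN. exists N => k Hk. exact: HN.
Qed.

Lemma cauchy_R (u : nat -> R) :
  (forall e : R, 0 < e -> exists K : nat, forall k m, (K <= k)%N -> (K <= m)%N -> `|u k - u m| < e) ->
  exists l, forall e : R, 0 < e -> exists K : nat, forall k, (K <= k)%N -> `|u k - l| < e.
Proof.
move=> Hc.
have : cvg (u @ \oo).
  apply/cauchy_cvgP/cauchy_ballP => e e0.
  have [K HK] := Hc e e0. near_simpl.
  exists ([set k | (K <= k)%N], [set k | (K <= k)%N]).
  split; by exists K.
  case=> k m /= [Hk Hm]. rewrite /ball /=. rewrite distrC. exact: HK.
move=> Hl. exists (lim (u @ \oo)). apply: cvg_epsK. exact: Hl.
Qed.

Lemma Re_le (c : C) : `|complex.Re c| <= cabs c.
Proof.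
case: c => a b /=; rewrite /cabs /= -sqrtr_sqr.
by apply: ler_wsqrtr; rewrite lerDl sqr_ge0.
Qed.

Lemma Im_le (c : C) : `|complex.Im c| <= cabs c.
Proof.
case: c => a b /=; rewrite /cabs /= -sqrtr_sqr.
by apply: ler_wsqrtr; rewrite lerDr sqr_ge0.
Qed.

Lemma cabs_i : cabs ('i : C) = 1.
Proof. by rewrite /cabs /= expr0n expr1n /= add0r sqrtr1. Qed.

Lemma cabs_le_ReIm (c : C) : cabs c <= `|complex.Re c| + `|complex.Im c|.
Proof.
case: c => a b.
rewrite [complex.Re _]/= [complex.Im _]/=.
have -> : Complex a b = a%:C + 'i * b%:C.
  by apply/eqP; rewrite eq_complex /= !mul0r !mul1r !subr0 !addr0 !add0r !eqxx.
apply: le_trans (cabsD _ _) _.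
by rewrite cabsM !cabs_real cabs_i mul1r.
Qed.

Lemma cabsN (x : C) : cabs (- x) = cabs x.
Proof. exact: normcN. Qed.

Lemma cabsBC (x y : C) : cabs (x - y) = cabs (y - x).
Proof. by rewrite -cabsN opprB. Qed.

Lemma cabsB3 (x y z : C) : cabs (x - z) <= cabs (x - y) + cabs (y - z).
Proof. by have := cabsD (x - y) (y - z); rewrite addrA subrK. Qed.

Lemma cauchy_C (u : nat -> C) : cauchy_in (V := C^o) (@cabs R) u ->
  exists l, cvg_in (V := C^o) (@cabs R) u l.
Proof.
move=> h.
have [a ha] : exists a, forall e : R, 0 < e -> exists K : nat, forall k, (K <= k)%N -> `|complex.Re (u k) - a| < e.
  apply: cauchy_R => e e0; have [K HK] := h e e0; exists K => k m Hk Hm.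
  apply: le_lt_trans (HK k m Hk Hm).
  by apply: le_trans (Re_le (u k - u m)); case: (u k) => ? ?; case: (u m).
have [b hb] : exists b, forall e : R, 0 < e -> exists K : nat, forall k, (K <= k)%N -> `|complex.Im (u k) - b| < e.
  apply: cauchy_R => e e0; have [K HK] := h e e0; exists K => k m Hk Hm.
  apply: le_lt_trans (HK k m Hk Hm).
  by apply: le_trans (Im_le (u k - u m)); case: (u k) => ? ?; case: (u m).
exists (a +i* b).
apply: (tends0_le (r := fun k => `|complex.Re (u k) - a| + `|complex.Im (u k) - b|)).
  move=> k; apply: le_trans (cabs_le_ReIm _) _.
  by case: (u k) => ? ?.
by apply: tends0_add.
Qed.

End Compl.

Section Ext.
Variable R : realType.
Local Notation C := R[i].
Variables (A0 : algType C) (n : A0 -> R) (X : lmodType C) (nX : X -> R) (j : A0 -> X).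
Variable w : A0 -> C.
Variable gamma : R.
Hypotheses (hnX : is_norm nX) (jlin : linear_fun j) (jn : forall a, nX (j a) = n a)
  (jdense : forall x : X, exists u : nat -> A0, cvg_in nX (j \o u) x)
  (hn : is_norm n) (wlin : linear_fun (w : A0 -> C^o))
  (hg0 : 0 < gamma) (hgb : forall a, cabs (w a) <= gamma * n a).

Lemma cvg_ext (V : lmodType C) (N : V -> R) u v l :
  (forall k, u k = v k) -> cvg_in N u l -> cvg_in N v l.
Proof. by move=> h hu e e0; have [K HK] := hu e e0; exists K => k Hk; rewrite -h; apply: HK. Qed.

Lemma cvg_ext2 (V : lmodType C) (N : V -> R) u v l1 l2 :
  l1 = l2 -> (forall k, u k = v k) -> cvg_in N u l1 -> cvg_in N v l2.
Proof. by move=> <-; apply: cvg_ext. Qed.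

Lemma j0 : j 0 = 0.
Proof.
have := jlin 1 0 0; rewrite !scale1r !addr0 => h.
by apply: (addrI (j 0)); rewrite addr0 -h.
Qed.

Lemma jD a b : j (a + b) = j a + j b.
Proof. by have := jlin 1 a b; rewrite !scale1r. Qed.

Lemma jB a b : j (a - b) = j a - j b.
Proof. have h := jlin (-1) b a; rewrite scaleN1r in h.
by rewrite addrC h scaleN1r addrC. Qed.

Lemma jZ c a : j (c *: a) = c *: j a.
Proof. by have := jlin c a 0; rewrite !addr0 j0 addr0. Qed.

Lemma w0 : w 0 = 0.
Proof.
have := wlin 1 0 0; rewrite !scale1r !addr0 => h.
by apply: (addrI (w 0)); rewrite addr0 -h.
Qed.

Lemma wD a b : w (a + b) = w a + w b.
Proof. by have := wlin 1 a b; rewrite !scale1r. Qed.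

Lemma wB a b : w (a - b) = w a - w b.
Proof. have h := wlin (-1) b a; rewrite scaleN1r in h.
by rewrite addrC h scaleN1r addrC. Qed.

Lemma wZ c a : w (c *: a) = c * w a.
Proof. by have := wlin c a 0; rewrite !addr0 w0 addr0. Qed.

Lemma w_cauchy u x : cvg_in nX (j \o u) x -> cauchy_in (V := C^o) (@cabs R) (w \o u).
Proof.
move=> h e e0.
have eg : 0 < e / gamma by rewrite divr_gt0.
have [K HK] := cvg_cauchy_in hnX h eg.
exists K => k m Hk Hm /=.
rewrite -wB; apply: le_lt_trans (hgb _) _.
rewrite -jn jB -ltr_pdivlMl // mulrC; exact: HK.
Qed.

Definition limw (x : X) : C :=
  epsilon (inhabits 0) (fun L : C => exists u : nat -> A0,
     cvg_in nX (j \o u) x /\ cvg_in (V := C^o) (@cabs R) (w \o u) L).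

Lemma limw_spec u x : cvg_in nX (j \o u) x -> cvg_in (V := C^o) (@cabs R) (w \o u) (limw x).
Proof.
move=> hu.
pose P := fun L : C => exists u1 : nat -> A0,
   cvg_in nX (j \o u1) x /\ cvg_in (V := C^o) (@cabs R) (w \o u1) L.
have ex : exists L, P L.
  have [L hL] := cauchy_C (w_cauchy hu).
  by exists L, u.
have [u1 [hu1 hw1']] := epsilon_spec (inhabits (0:C)) P ex.
have hw1 : cvg_in (V := C^o) (@cabs R) (w \o u1) (limw x) := hw1'.
apply: (tends0_le (r := fun k => gamma * (nX (j (u k) - x) + nX (j (u1 k) - x))
                             + cabs (w (u1 k) - limw x))).
  move=> k /=.
  apply: le_trans (cabsB3 _ (w (u1 k)) _) _.
  apply: lerD => //.
  rewrite -wB; apply: le_trans (hgb _) _.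
  apply: ler_wpM2l; first exact: ltW.
  rewrite -jn jB; apply: le_trans (NB3 hnX _ x _) _.
  by rewrite [nX (x - _)](NBC hnX).
apply: tends0_add => //.
by apply: tends0_scale; [exact: ltW | apply: tends0_add].
Qed.

Lemma limw_j a : limw (j a) = w a.
Proof.
have h := limw_spec (cvg_const hnX (j a) : cvg_in nX (j \o (fun _ => a)) (j a)).
exact: (cvg_unique (@cabs_norm R) h (cvg_const (@cabs_norm R) (w a))).
Qed.

Lemma limw_lin : linear_fun (limw : X -> C^o).
Proof.
move=> c x y.
have [u hu] := jdense x; have [v hv] := jdense y.
have h1 : cvg_in nX (j \o (fun k => c *: u k + v k)) (c *: x + y).
  apply: cvg_ext (cvg_lin hnX c hu hv) => k /=.
  by rewrite jlin.
have h2 := limw_spec h1.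
have h3 := cvg_lin (@cabs_norm R) c (limw_spec hu) (limw_spec hv).
have h4 : cvg_in (V := C^o) (@cabs R) (w \o (fun k => c *: u k + v k)) (c *: limw x + limw y).
  by apply: cvg_ext h3 => k /=; rewrite wlin.
exact: (cvg_unique (@cabs_norm R) h2 h4).
Qed.

Lemma limw_bound x : cabs (limw x) <= gamma * nX x.
Proof.
apply/ler_addgt0Pr => e e0.
have [u hu] := jdense x.
have h := tends0_add (limw_spec hu) (tends0_scale (ltW hg0) hu).
have [K HK] := h e e0.
have := HK K (leqnn K) => /= hK.
have := cabsB3 (limw x) (w (u K)) 0; rewrite !subr0 => hb.
apply: le_trans hb _; rewrite [cabs (limw x - _)]cabsBC.
have h3 : cabs (w (u K)) <= gamma * nX (j (u K) - x) + gamma * nX x.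
  apply: le_trans (hgb _) _.
  rewrite -mulrDr; apply: ler_wpM2l; first exact: ltW.
  rewrite -jn; have := NB3 hnX (j (u K)) x 0; rewrite !subr0 => h4.
  by apply: le_trans h4 _.
move: hK h3; set a1 := cabs _; set a2 := cabs _; set b := gamma * _; set c := gamma * _.
move=> hK h3. lra.
Qed.

Lemma omega_bar_j a : omega_bar nX j w (j a) = w a.
Proof.
have : [/\ linear_fun (omega_bar nX j w : X -> C^o),
         (exists g : R, forall x, cabs (omega_bar nX j w x) <= g * nX x) &
         forall a, omega_bar nX j w (j a) = w a].
  apply: (epsilon_spec (inhabits (fun _ : X => (0:C))) (fun f : X -> C => [/\ linear_fun (f : X -> C^o),
         (exists g : R, forall x, cabs (f x) <= g * nX x) &
         forall a, f (j a) = w a])).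
  exists limw; split; [exact: limw_lin | by exists gamma; apply: limw_bound | exact: limw_j].
by case=> _ _ ->.
Qed.

End Ext.

Section LM.
Variable R : realType.
Local Notation C := R[i].
Variables (A0 : algType C) (star : A0 -> A0) (n0 n : A0 -> R) (X : lmodType C) (nX : X -> R) (j : A0 -> X).
Hypotheses (hnX : is_norm nX) (jlin : linear_fun j) (jn : forall a, nX (j a) = n a)
  (hn0 : is_norm n0)
  (starM : forall a b, star (a * b) = star b * star a)
  (n_star : forall a, n (star a) = n a)
  (n_mul : forall a b, n (a * b) <= n a * n0 b).

Lemma n_lmul a b : n (a * b) <= n b * n0 (star a).
Proof. by rewrite -n_star starM; apply: le_trans (n_mul _ _) _; rewrite n_star. Qed.

Lemma leftmul_j a Y : leftmul nX j a (j Y) = j (a * Y).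
Proof.
pose P := fun z : X => exists u : nat -> A0,
     cvg_in nX (j \o u) (j Y) /\ cvg_in nX (fun k => j (a * u k)) z.
have ex : exists z, P z.
  exists (j (a * Y)), (fun _ => Y); split.
    exact: (cvg_const hnX (j Y)).
  exact: (cvg_const hnX (j (a * Y))).
have [u [hu hz']] := epsilon_spec (inhabits 0) P ex.
have hz : cvg_in nX (fun k => j (a * u k)) (leftmul nX j a (j Y)) := hz'.
have h2 : cvg_in nX (fun k => j (a * u k)) (j (a * Y)).
  apply: (tends0_le (r := fun k => n0 (star a) * nX ((j \o u) k - j Y))).
    move=> k /=. rewrite -(jB jlin) -mulrBr jn -(jB jlin) jn mulrC; exact: n_lmul.
  by apply: tends0_scale => //; apply: (N_ge0 hn0).
exact: (cvg_unique hnX hz h2).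
Qed.

End LM.

Section Trig.
Variable R : realType.
Local Notation C := R[i].

Lemma cabsV (x : C) : cabs x^-1 = (cabs x)^-1.
Proof. exact: ComplexField.Normc.normcV. Qed.

Lemma cabsX (x : C) m : cabs (x ^+ m) = cabs x ^+ m.
Proof.
elim: m => [|m IH]; first by rewrite !expr0 /cabs /= expr0n /= expr1n addr0 sqrtr1.
by rewrite !exprS cabsM IH.
Qed.

Lemma iexp_even (s : R) p :
  ('i * s%:C) ^+ p.*2 / (p.*2)`!%:R = (cos_coeff s p.*2)%:C + 'i * (sin_coeff s p.*2)%:C.
Proof.
rewrite sin_coeff_even mulr0 addr0 /cos_coeff /= odd_double /= doubleK mul1r.
rewrite exprMn -mul2n exprM sqr_i.
by rewrite !rmorphM /= rmorphXn rmorphN1 fmorphV rmorph_nat rmorphXn.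
Qed.

Lemma iexp_odd (s : R) p :
  ('i * s%:C) ^+ p.*2.+1 / (p.*2.+1)`!%:R = (cos_coeff s p.*2.+1)%:C + 'i * (sin_coeff s p.*2.+1)%:C.
Proof.
rewrite cos_coeff_odd add0r /sin_coeff /= odd_double /= doubleK mul1r.
rewrite exprMn exprS -mul2n exprM sqr_i.
rewrite !rmorphM /= rmorphXn rmorphN1 fmorphV rmorph_nat rmorphXn.
by rewrite mul2n -!mulrA; congr (_ * _).
Qed.

Lemma iexp_term (s : R) m :
  ('i * s%:C) ^+ m / m`!%:R = (cos_coeff s m)%:C + 'i * (sin_coeff s m)%:C.
Proof.
have := odd_double_half m; case: (odd m) => /= <-.
  by rewrite add1n; apply: iexp_odd.
by rewrite add0n; apply: iexp_even.
Qed.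

End Trig.

Section TrigCvg.
Local Open Scope classical_set_scope.
Variable R : realType.
Local Notation C := R[i].

Lemma ReIm_is (s : R) : complex.Re ('i * s%:C : C) = 0 /\ complex.Im ('i * s%:C : C) = s.
Proof. by rewrite /= !mul0r !mul1r ?mulr0 subr0 ?add0r. Qed.

Lemma iexp_cvg (s : R) : cvg_in (V := C^o) (@cabs R)
   (fun k => \sum_(m < k) ('i * s%:C) ^+ m / (m`!)%:R) (expC ('i * s%:C)).
Proof.
have hc : series (cos_coeff s) @ \oo --> cos s.
  have -> : cos s = lim (series (cos_coeff s) @ \oo) by rewrite unlock.
  exact: is_cvg_series_cos_coeff.
have hs : series (sin_coeff s) @ \oo --> sin s.
  have -> : sin s = lim (series (sin_coeff s) @ \oo) by rewrite unlock.
  exact: is_cvg_series_sin_coeff.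
have hc' := cvg_epsK hc; have hs' := cvg_epsK hs.
apply: (tends0_le (r := fun k => `|series (cos_coeff s) k - cos s| + `|series (sin_coeff s) k - sin s|)); last first.
  by apply: tends0_add.
move=> k.
have -> : \sum_(m < k) ('i * s%:C) ^+ m / (m`!)%:R =
   (series (cos_coeff s) k)%:C + 'i * (series (sin_coeff s) k)%:C.
  under eq_bigr do rewrite iexp_term.
  rewrite big_split /= /series /= !big_mkord !raddf_sum /= mulr_sumr.
  done.
have [h1 h2] := ReIm_is s.
rewrite /expC h1 h2 expR0 rmorph1 mul1r.
have -> : (series (cos_coeff s) k)%:C + 'i * (series (sin_coeff s) k)%:C -
     ((cos s)%:C + 'i * (sin s)%:C) =
     (series (cos_coeff s) k - cos s)%:C + 'i * (series (sin_coeff s) k - sin s)%:C.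
  by rewrite !rmorphB /= mulrBr opprD addrACA.
apply: le_trans (cabsD _ _) _.
by rewrite cabsM cabs_i mul1r !cabs_real.
Qed.

End TrigCvg.

Section ExpA.
Local Open Scope classical_set_scope.
Variable R : realType.
Local Notation C := R[i].
Variables (A0 : algType C) (star : A0 -> A0) (n0 : A0 -> R) (H : A0).
Hypotheses (hn0 : is_norm n0) (n0M : forall a b, n0 (a * b) <= n0 a * n0 b)
  (n0C : forall a, n0 (star a * a) = n0 a ^+ 2) (n0comp : complete_in n0)
  (starM : forall a b, star (a * b) = star b * star a)
  (starK : forall a, star (star a) = a).

Lemma star1 : star 1 = 1.
Proof.
have := congr1 star (mulr1 (star 1)).
by rewrite starM !starK mulr1 => ->.
Qed.

Lemma n0_1 : n0 1 <= 1.
Proof.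
have := n0C 1; rewrite star1 mulr1 => h.
have : n0 1 * (n0 1 - 1) = 0 by rewrite mulrBr mulr1 -expr2 -h subrr.
move/eqP; rewrite mulf_eq0 => /orP [/eqP -> // | ].
by rewrite subr_eq0 => /eqP ->.
Qed.

Lemma n0X m : n0 (H ^+ m) <= n0 H ^+ m.
Proof.
elim: m => [|m IH]; first by rewrite !expr0 n0_1.
rewrite !exprS; apply: le_trans (n0M _ _) _.
by apply: ler_wpM2l => //; apply: (N_ge0 hn0).
Qed.

Lemma n0_sum (I : Type) (r : seq I) (P : pred I) (F : I -> A0) :
  n0 (\sum_(i <- r | P i) F i) <= \sum_(i <- r | P i) n0 (F i).
Proof.
elim: r => [|x r IH]; first by rewrite !big_nil (N0 hn0).
rewrite !big_cons; case: (P x) => //.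
by apply: le_trans (ND hn0 _ _) _; rewrite lerD2l.
Qed.

Definition Sk (t : R) (k : nat) : A0 :=
  \sum_(m < k) (('i * t%:C) ^+ m / (m`!)%:R) *: H ^+ m.

Lemma Sk_nat t k : Sk t k = \sum_(0 <= m < k) (('i * t%:C) ^+ m / (m`!)%:R) *: H ^+ m.
Proof. by rewrite big_mkord. Qed.

Lemma term_bound (t : R) i :
  n0 ((('i * t%:C) ^+ i / (i`!)%:R) *: H ^+ i) <= exp_coeff (`|t| * n0 H) i.
Proof.
rewrite (NZ hn0) cabsM cabsX cabsM cabs_i mul1r cabs_real.
rewrite cabsV.
have -> : (i`!%:R : C) = (i`!%:R : R)%:C by rewrite rmorph_nat.
rewrite cabs_real normr_nat /exp_coeff /= exprMn mulrAC.
apply: ler_wpM2r; first by rewrite invr_ge0 ler0n.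
by apply: ler_wpM2l; [apply: exprn_ge0; apply: normr_ge0 | apply: n0X].
Qed.

Lemma addKB (V : zmodType) (x y : V) : x + y - x = y.
Proof. by rewrite addrAC subrr add0r. Qed.

Lemma Sk_diff t m k : (m <= k)%N ->
  n0 (Sk t k - Sk t m) <= series (exp_coeff (`|t| * n0 H)) k - series (exp_coeff (`|t| * n0 H)) m.
Proof.
move=> hmk.
rewrite !Sk_nat /series /= (@big_cat_nat _ _ _ m 0 k) // addKB.
rewrite (@big_cat_nat _ _ _ m 0 k) //= addKB.
apply: le_trans (n0_sum _ _ _) _.
by apply: ler_sum => i _; apply: term_bound.
Qed.

Lemma Sk_cauchy t : cauchy_in n0 (Sk t).
Proof.
have hT := cvg_epsK (is_cvg_series_exp_coeff (`|t| * n0 H)).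
set T := series _ in hT.
set l := lim _ in hT.
move=> e e0.
have e2 : 0 < e / 2 by rewrite divr_gt0.
have [K HK] := hT _ e2.
exists K => k m Hk Hm.
have key : forall k m, (K <= k)%N -> (K <= m)%N -> (m <= k)%N -> n0 (Sk t k - Sk t m) < e.
  move=> k1 m1 Hk1 Hm1 hmk.
  apply: le_lt_trans (Sk_diff t hmk) _.
  apply: le_lt_trans (ler_norm _) _.
  have := HK k1 Hk1; have := HK m1 Hm1.
  have : `|T k1 - T m1| <= `|T k1 - l| + `|T m1 - l|.
    by rewrite -[`|T m1 - l|]normrN opprB; apply: le_trans (ler_normD _ _); rewrite addrA subrK.
  rewrite /T; set a := `|_|; set b := `|_|; set c := `|_|.
  move=> h1 h2 h3. rewrite (splitr e). lra.
case: (leqP m k) => hmk; first exact: key.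
by rewrite (NBC hn0); apply: key => //; apply: ltnW.
Qed.

Lemma expA_spec t : cvg_in n0 (Sk t) (expA n0 H t).
Proof.
pose P := fun U : A0 => cvg_in n0 (fun k => \sum_(m < k) (('i * t%:C) ^+ m / (m`!)%:R) *: H ^+ m) U.
have ex : exists U, P U by apply: n0comp; apply: Sk_cauchy.
exact: (epsilon_spec (inhabits 0) P ex).
Qed.

End ExpA.

Section Final.
Variable R : realType.
Local Notation C := R[i].

Lemma ImD (x y : C) : complex.Im (x + y) = complex.Im x + complex.Im y.
Proof. by case: x; case: y. Qed.

Variables (A0 : algType C) (star : A0 -> A0) (n0 n : A0 -> R) (H : A0) (w : A0 -> C).
Variable gamma : R.
Hypotheses (hn0 : is_norm n0) (n0M : forall a b, n0 (a * b) <= n0 a * n0 b)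
  (n0C : forall a, n0 (star a * a) = n0 a ^+ 2) (n0comp : complete_in n0)
  (starD : forall a b, star (a + b) = star a + star b)
  (starM : forall a b, star (a * b) = star b * star a)
  (starK : forall a, star (star a) = a) (hH : star H = H)
  (hn : is_norm n) (n_mul : forall a b, n (a * b) <= n a * n0 b)
  (wlin : linear_fun (w : A0 -> C^o)) (wpos : forall a, 0 <= w (star a * a))
  (w1 : w 1 = 1)
  (hg0 : 0 < gamma) (hgb : forall a, cabs (w a) <= gamma * n a).

Lemma wH_real : complex.Im (w H) = 0.
Proof.
have h := wpos (1 + H).
rewrite starD (star1 starM starK) hH mulrDl mul1r mulrDr mulr1 !(wD wlin) w1 in h.
have h2 := wpos H; rewrite hH in h2.
have e1 := ger0_Im h; have e2 := ger0_Im h2.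
rewrite !ImD /= in e1.
lra.
Qed.

Lemma w_pow alpha (hii : forall a, w (a * H) = alpha * w a) a m :
  w (a * H ^+ m) = alpha ^+ m * w a.
Proof.
elim: m => [|m IH]; first by rewrite expr0 mulr1 mul1r.
by rewrite exprSr mulrA hii IH mulrA -exprS.
Qed.

Lemma main_iv alpha (hii : forall a, w (a * H) = alpha * w a) t a :
  w (a * expA n0 H t) = expC ('i * t%:C * alpha) * w a.
Proof.
have ha : alpha = (complex.Re alpha)%:C.
  have := hii 1; rewrite !mul1r w1 mulr1 => <-.
  by move: wH_real; case: (w H) => x y /= ->.
set s := t * complex.Re alpha.
have hz : 'i * t%:C * alpha = 'i * s%:C by rewrite ha -mulrA -rmorphM.
have hU := expA_spec H hn0 n0M n0C n0comp starM starK t.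
have h1 : cvg_in (V := C^o) (@cabs R) (fun k => w (a * Sk H t k)) (w (a * expA n0 H t)).
  apply: (tends0_le (r := fun k => gamma * n a * n0 (Sk H t k - expA n0 H t))).
    move=> k /=; rewrite -(wB wlin) -mulrBr; apply: le_trans (hgb _) _.
    rewrite -mulrA; apply: ler_wpM2l; [exact: ltW | exact: n_mul].
  apply: tends0_scale => //; apply: mulr_ge0; [exact: ltW | exact: (N_ge0 hn)].
have h2 : cvg_in (V := C^o) (@cabs R) (fun k => w (a * Sk H t k)) (expC ('i * t%:C * alpha) * w a).
  have h3 := cvg_lin (@cabs_norm R) (w a) (iexp_cvg s) (cvg_const (@cabs_norm R) 0).
  rewrite hz.
  apply: (cvg_ext2 _ _ h3); first by change (w a * expC ('i * s%:C) + 0 = expC ('i * s%:C) * w a); rewrite addr0 mulrC.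
  move=> k /=.
  change (w a * (\sum_(m < k) ('i * s%:C) ^+ m / m`!%:R) + 0 = w (a * Sk H t k)).
  rewrite addr0 /Sk !mulr_sumr (big_morph w (wD wlin) (w0 wlin)).
  apply: eq_bigr => i _.
  rewrite -scalerAr (wZ wlin) (w_pow hii) -hz !exprMn.
  ring.
exact: (cvg_unique (@cabs_norm R) h1 h2).
Qed.

End Final.

Theorem lemma5p3 (R : realType) (A0 : algType R[i]) (star : A0 -> A0)
  (n0 n : A0 -> R) (X : lmodType R[i]) (nX : X -> R) (j : A0 -> X)
  (hCQ : is_CQstar_algebra star n0 n nX j)
  (H : A0) (hH : star H = H) (w : A0 -> R[i]) (hw : in_E star n w)
  (alpha : R[i]) :
  let st_i := eigenstate_bar nX j w (j H) alpha in
  let st_ii := eigenstate w H alpha in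
  let st_iii := forall t : R,
      eigenstate_bar nX j w (j (expA n0 H t)) (expC ('i * t%:C * alpha)) in
  let st_iv := forall t : R,
      eigenstate w (expA n0 H t) (expC ('i * t%:C * alpha)) in
  [/\ st_i <-> st_ii, st_iii <-> st_iv & st_ii -> st_iv].
Proof.
case: hCQ => [[[[starD starZ starM starK] [hn0 n0M n0C n0comp]] hn n_le n_mul n_star]
   [hnX Xcomp jlin jn jdense]].
case: hw => wlin wpos w1 [gamma [hg0 hgb]].
have equiv : forall Y beta, eigenstate_bar nX j w (j Y) beta <-> eigenstate w Y beta.
  move=> Y beta; rewrite /eigenstate_bar /eigenstate.
  split=> h a; have := h a;
  by rewrite (leftmul_j hnX jlin jn hn0 starM n_star n_mul)
     !(omega_bar_j hnX jlin jn jdense wlin hg0 hgb).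
move=> st_i st_ii st_iii st_iv.
split.
- exact: equiv.
- by split=> h t; apply/equiv; apply: h.
- move=> hii t a.
  exact: (main_iv hn0 n0M n0C n0comp starD starM starK hH hn n_mul wlin wpos w1 hg0 hgb hii).
Qed.
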